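(* Let $3\le k\le d+1$. For $x_1,\ldots,x_k\in\mathbb S^{d-1}$ write $u_{i,j}=\langle x_i,x_j\rangle$, let $W$ be the Gram matrix of $x_3,\ldots,x_k$, $\operatorname{adj}(W)$ its adjugate, and $w_h=(u_{h,3},\ldots,u_{h,k})^T$ for $h=1,2$. Then the kernel $$Q_{k,1}^d(x_1,\ldots,x_k)=\det(W)\,u_{1,2}-w_1^T\operatorname{adj}(W)\,w_2$$ (which equals $\det(W)\langle y_1,y_2\rangle$, where $y_1,y_2$ are the orthogonal projections of $x_1,x_2$ onto the orthogonal complement of $\operatorname{span}\{x_3,\ldots,x_k\}$) is $k$-positive definite, and $I_{Q_{k,1}^d}$ is minimized over $\mathcal P(\mathbb S^{d-1})$ by $\sigma$.
   Context: $\mathbb S^{d-1}$ is the unit sphere in $\mathbb R^d$, $\mathcal P(\mathbb S^{d-1})$ the Borel probability measures, $\sigma$ the normalized surface measure; $I_K(\mu)=\int\cdots\int K(x_1,\ldots,x_k)\,d\mu(x_1)\cdots d\mu(x_k)$. A continuous kernel $K:(\mathbb S^{d-1})^k\to\mathbb R$ symmetric in its first two variables is $k$-positive definite if for all fixed $z_3,\ldots,z_k\in\mathbb S^{d-1}$ and every finite signed Borel measure $\nu$ on $\mathbb S^{d-1}$, $\int\int K(x,y,z_3,\ldots,z_k)\,d\nu(x)d\nu(y)\ge0$. *)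

(* Defs.v *)
From HB Require Import structures.
From mathcomp Require Import all_boot all_algebra.
From mathcomp Require Import all_classical all_reals all_analysis.
Set Implicit Arguments. Unset Strict Implicit. Unset Printing Implicit Defensive.
Import GRing.Theory Num.Theory.
Import numFieldNormedType.Exports.
Local Open Scope classical_set_scope.
Local Open Scope ring_scope.

(* Points of R^d are d-tuples of reals; d.-tuple R carries the product
   (= Borel) sigma-algebra of the library. *)
Notation vec R d := (d.-tuple R).

Definition dotv {R : realType} {d : nat} (x y : vec R d) : R :=
  \sum_(i < d) tnth x i * tnth y i.

Definition sphere (R : realType) (d : nat) : set (vec R d) :=
  [set x | dotv x x = 1].
Arguments sphere : clear implicits.

(* A k-point configuration is a map nat -> R^d, of which the entries
   0,...,k-1 are used (x_1 = x 0, x_2 = x 1, x_3 = x 2, ...). *)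

Definition gram_u {R : realType} {d : nat} (x : nat -> vec R d) (i j : nat) : R :=
  dotv (x i) (x j).

Definition Wmx {R : realType} {d : nat} (k : nat) (x : nat -> vec R d)
  : 'M[R]_(k - 2) := \matrix_(i, j) gram_u x (i + 2)%N (j + 2)%N.

Definition wvec {R : realType} {d : nat} (k : nat) (x : nat -> vec R d) (h : nat)
  : 'cV[R]_(k - 2) := \col_i gram_u x h (i + 2)%N.

Definition Qk1 {R : realType} {d : nat} (k : nat) (x : nat -> vec R d) : R :=
  \det (Wmx k x) * gram_u x 0 1
  - (((wvec k x 0)^T *m \adj (Wmx k x)) *m wvec k x 1) ord0 ord0.

Definition cfg {T : Type} (x y : T) (z : nat -> T) : nat -> T :=
  fun i => if i == 0%N then x else if i == 1%N then y else z i.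

Definition cint {R : realType} {d : nat} (nu : {charge set (vec R d) -> \bar R})
  (P N : set (vec R d)) (nuPN : hahn_decomposition nu P N) (f : vec R d -> R) : R :=
  Rintegral (jordan_pos nuPN) (sphere R d) f - Rintegral (jordan_neg nuPN) (sphere R d) f.

(* k-positive definiteness of a kernel K on (S^{d-1})^k (symmetry in the
   first two variables is part of the notion) *)
Definition k_pos_def {R : realType} {d : nat} (k : nat) (K : (nat -> vec R d) -> R) : Prop :=
  (forall (x y : vec R d) (z : nat -> vec R d),
      sphere R d x -> sphere R d y ->
      (forall i, (2 <= i < k)%N -> sphere R d (z i)) ->
      K (cfg x y z) = K (cfg y x z)) /\
  (forall z : nat -> vec R d,
      (forall i, (2 <= i < k)%N -> sphere R d (z i)) ->
      forall (nu : {charge set (vec R d) -> \bar R}) (P N : set (vec R d))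
             (nuPN : hahn_decomposition nu P N),
        0 <= cint nuPN (fun y => cint nuPN (fun x => K (cfg x y z)))).

Fixpoint iter_int {R : realType} {d : nat} (mu : {measure set (vec R d) -> \bar R})
  (n : nat) (F : seq (vec R d) -> R) : R :=
  match n with
  | 0 => F [::]
  | n.+1 => Rintegral mu (sphere R d) (fun x => iter_int mu n (fun s => F (x :: s)))
  end.

Definition energy {R : realType} {d : nat} (k : nat) (K : (nat -> vec R d) -> R)
  (mu : {measure set (vec R d) -> \bar R}) : R :=
  iter_int mu k (fun s => K (fun i => nth (nseq_tuple d 0) s i)).

(* Borel probability measures on S^{d-1}: probabilities on R^d concentrated on the sphere *)
Definition sphere_prob {R : realType} {d : nat} (mu : probability (vec R d) R) : Prop :=
  mu (sphere R d) = 1%E.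

Definition mxact {R : realType} {d : nat} (U : 'M[R]_d) (x : vec R d) : vec R d :=
  [tuple \sum_(j < d) U i j * tnth x j | i < d].

(* sigma = normalized surface measure on S^{d-1}, characterized as the
   (unique) Borel probability measure on S^{d-1} invariant under O(d) *)
Definition is_normalized_surface_measure {R : realType} {d : nat}
  (sigma : probability (vec R d) R) : Prop :=
  sigma (sphere R d) = 1%E /\
  forall U : 'M[R]_d, U *m U^T = 1%:M ->
    forall A : set (vec R d), measurable A -> sigma (mxact U @^-1` A) = sigma A.

(* Main.v *)
Require Import Defs.
From HB Require Import structures.
From mathcomp Require Import all_boot all_algebra.
From mathcomp Require Import all_classical all_reals all_analysis.
From mathcomp Require Import all_order.
Import Order.TTheory GRing.Theory Num.Theory.
Local Open Scope classical_set_scope.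
Local Open Scope ring_scope.
From mathcomp Require Import lra ring measurable_realfun.
Section Alg.
Variable R : realType.

Lemma sqsum_ge0 m n (Y : 'M[R]_(m, n)) j : 0 <= (Y^T *m Y) j j.
Proof. rewrite mxE; apply: sumr_ge0 => a _; rewrite !mxE; by rewrite -expr2 sqr_ge0. Qed.

Lemma sqsum_eq0 m n (Y : 'M[R]_(m, n)) j : (Y^T *m Y) j j = 0 -> forall a, Y a j = 0.
Proof.
rewrite mxE => H a.
have P0 : forall b, predT b -> 0 <= Y^T j b * Y b j.
  by move=> b _; rewrite !mxE -expr2 sqr_ge0.
have := @psumr_eq0P _ _ predT (fun a => Y^T j a * Y a j) P0 H a isT.
by rewrite !mxE => /eqP; rewrite mulf_eq0 orbb => /eqP.
Qed.

Lemma gram_det_ge0 d n (X : 'M[R]_(d, n)) : 0 <= \det (X^T *m X).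
Proof.
elim: n X => [|n IH] X; first by rewrite det_mx00.
move: X; change (forall X : 'M[R]_(d, 1 + n), 0 <= \det (X^T *m X)) => X.
rewrite -[X]hsubmxK.
set x := lsubmx _; set X' := rsubmx _.
set c := (x^T *m x) ord0 ord0.
have c0 : 0 <= c by exact: sqsum_ge0.
have [cz|cnz] := eqVneq c 0.
  have x0 : x = 0.
    apply/matrixP => a j; by rewrite (ord1 j) [RHS]mxE; exact: (@sqsum_eq0 _ _ x ord0 cz a).
  rewrite x0 tr_row_mx mul_col_row !(trmx0, mul0mx, mulmx0) det_ublock.
  by rewrite [X in X * _]det_mx11 mxE mul0r.
set B := - (c^-1) *: (x^T *m X').
set E : 'M[R]_(1 + n) := block_mx 1%:M B 0 1%:M.
have dE : \det E = 1 by rewrite det_ublock !det1 mulr1.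
have -> : \det ((row_mx x X')^T *m row_mx x X') =
   \det ((row_mx x X' *m E)^T *m (row_mx x X' *m E)).
  by rewrite trmx_mul -mulmxA !det_mulmx det_tr dE mul1r mulmxA det_mulmx dE mulr1.
rewrite mul_row_block !(mulmx1, mulmx0, addr0) tr_row_mx mul_col_row.
set Y := _ + X'.
have xx : x^T *m x = c%:M by rewrite {1}[x^T *m x]mx11_scalar.
have xY : x^T *m Y = 0.
  rewrite /Y mulmxDr mulmxA xx /B mul_scalar_mx scalerA mulrN divff // scaleN1r.
  by rewrite addNr.
have Yx : Y^T *m x = 0 by rewrite -[x]trmxK -trmx_mul xY trmx0.
rewrite xY Yx det_ublock xx det_scalar expr1.
by apply: mulr_ge0 => //; exact: IH.
Qed.
Lemma K_psd d n (Z : 'M[R]_(d, n)) (V : 'cV[R]_d) :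
  0 <= (V^T *m (\det (Z^T *m Z) *: 1%:M - Z *m \adj (Z^T *m Z) *m Z^T) *m V) ord0 ord0.
Proof.
set W := Z^T *m Z; set A := \adj W; set D := \det W.
have WT : W^T = W by rewrite /W trmx_mul trmxK.
have AT : A^T = A by rewrite /A trmx_adj WT.
have AW : A *m W = D%:M by exact: mul_adj_mx.
have D0 : 0 <= D := gram_det_ge0 _ _ Z.
have [Dz|Dnz] := eqVneq D 0.
  have P0 : Z *m A = 0.
    have PP : (Z *m A)^T *m (Z *m A) = 0.
      by rewrite trmx_mul AT -mulmxA (mulmxA Z^T) -/W mulmxA AW Dz mul_scalar_mx scale0r.
    apply/matrixP => a j; rewrite [RHS]mxE; apply: (@sqsum_eq0 _ _ _ j).
    by rewrite PP mxE.
  by rewrite Dz scale0r sub0r P0 !(mul0mx, mulmx0, oppr0) mxE.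
have Dp : 0 < D by rewrite lt0r Dnz D0.
set Y := D *: V - Z *m (A *m (Z^T *m V)).
have key : Y^T *m Y = D *: (V^T *m (D *: 1%:M - Z *m A *m Z^T) *m V).
  rewrite /Y [(D *: V - _)^T]linearB /= [(D *: V)^T]linearZ /= !trmx_mul trmxK AT.
  have Vu : V^T *m Z = (Z^T *m V)^T by rewrite trmx_mul trmxK.
  set u := Z^T *m V.
  rewrite mulmxBl !mulmxBr -!scalemxAl -!scalemxAr !scalerA.
  rewrite !mulmxA Vu -!(mulmxA _ _ Z) -/u -!(mulmxA _ A) -/W.
  by rewrite AW mul_mx_scalar mulmx1 mulmxBl -!scalemxAl subrr subr0 scalerBr scalerA.
have := sqsum_ge0 _ _ Y ord0; rewrite key mxE.
by rewrite (pmulr_rge0 _ Dp).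
Qed.
End Alg.

Section Good.
Variables (R : realType) (d : nat).
Local Notation V := (vec R d).
Local Notation v0 := (nseq_tuple d (0:R)).

Inductive good : (seq V -> R) -> Prop :=
| good_c c : good (fun _ => c)
| good_x i a : good (fun s => tnth (nth v0 s i) a)
| good_add f g : good f -> good g -> good (fun s => f s + g s)
| good_mul f g : good f -> good g -> good (fun s => f s * g s).

Lemma good_sum I (r : seq I) (P : pred I) (f : I -> seq V -> R) :
  (forall i, good (f i)) -> good (fun s => \sum_(i <- r | P i) f i s).
Proof.
move=> gf; elim: r => [|i r IH].
  have -> : (fun s => \sum_(i <- [::] | P i) f i s) = (fun _ => 0) by apply: funext => s; rewrite big_nil.
  exact: good_c.
have [Pi|nPi] := boolP (P i).
  have -> : (fun s => \sum_(j <- i :: r | P j) f j s) = (fun s => f i s + \sum_(j <- r | P j) f j s).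
    by apply: funext => s; rewrite big_cons Pi.
  exact: good_add.
have -> : (fun s => \sum_(j <- i :: r | P j) f j s) = (fun s => \sum_(j <- r | P j) f j s).
  by apply: funext => s; rewrite big_cons (negbTE nPi).
exact: IH.
Qed.

Lemma good_prod I (r : seq I) (P : pred I) (f : I -> seq V -> R) :
  (forall i, good (f i)) -> good (fun s => \prod_(i <- r | P i) f i s).
Proof.
move=> gf; elim: r => [|i r IH].
  have -> : (fun s => \prod_(i <- [::] | P i) f i s) = (fun _ => 1) by apply: funext => s; rewrite big_nil.
  exact: good_c.
have [Pi|nPi] := boolP (P i).
  have -> : (fun s => \prod_(j <- i :: r | P j) f j s) = (fun s => f i s * \prod_(j <- r | P j) f j s).
    by apply: funext => s; rewrite big_cons Pi.
  exact: good_mul.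
have -> : (fun s => \prod_(j <- i :: r | P j) f j s) = (fun s => \prod_(j <- r | P j) f j s).
  by apply: funext => s; rewrite big_cons (negbTE nPi).
exact: IH.
Qed.

Lemma good_opp f : good f -> good (fun s => - f s).
Proof.
move=> gf; have -> : (fun s => - f s) = (fun s => (-1) * f s) by apply: funext => s; rewrite mulN1r.
apply: good_mul => //; exact: good_c.
Qed.

Lemma good_sub f g : good f -> good g -> good (fun s => f s - g s).
Proof. by move=> gf gg; apply: good_add => //; exact: good_opp. Qed.

Definition goodmx m n (M : seq V -> 'M[R]_(m, n)) := forall i j, good (fun s => M s i j).
Arguments goodmx {m n}.

Lemma goodmx_mul m n p (A : seq V -> 'M[R]_(m, n)) (B : seq V -> 'M[R]_(n, p)) :
  goodmx A -> goodmx B -> goodmx (fun s => A s *m B s).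
Proof.
move=> gA gB i j.
have -> : (fun s => (A s *m B s) i j) = (fun s => \sum_l A s i l * B s l j).
  by apply: funext => s; rewrite mxE.
by apply: good_sum => l; apply: good_mul.
Qed.

Lemma goodmx_tr m n (A : seq V -> 'M[R]_(m, n)) : goodmx A -> goodmx (fun s => (A s)^T).
Proof.
move=> gA i j; have -> : (fun s => (A s)^T i j) = (fun s => A s j i) by apply: funext => s; rewrite mxE.
exact: gA.
Qed.

Lemma good_det n (A : seq V -> 'M[R]_n) : goodmx A -> good (fun s => \det (A s)).
Proof.
move=> gA; rewrite /determinant.
apply: good_sum => sg; apply: good_mul; first exact: good_c.
by apply: good_prod => i; apply: gA.
Qed.

Lemma goodmx_adj n (A : seq V -> 'M[R]_n) : goodmx A -> goodmx (fun s => \adj (A s)).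
Proof.
move=> gA i j.
have -> : (fun s => \adj (A s) i j) = (fun s => (-1) ^+ (j + i) * \det (row' j (col' i (A s)))).
  by apply: funext => s; rewrite mxE.
apply: good_mul; first exact: good_c.
apply: good_det => i' j'.
have -> : (fun s => row' j (col' i (A s)) i' j') = (fun s => A s (lift j i') (lift i j')).
  by apply: funext => s; rewrite !mxE.
exact: gA.
Qed.

Lemma goodmx_sub n m (A B : seq V -> 'M[R]_(m, n)) : goodmx A -> goodmx B -> goodmx (fun s => A s - B s).
Proof.
move=> gA gB i j; have -> : (fun s => (A s - B s) i j) = (fun s => A s i j - B s i j).
  by apply: funext => s; rewrite !mxE.
exact: good_sub.
Qed.

Lemma goodmx_scale1 n (c : seq V -> R) : good c -> goodmx (fun s => c s *: (1%:M : 'M[R]_n)).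
Proof.
move=> gc i j; have -> : (fun s => (c s *: (1%:M : 'M[R]_n)) i j) = (fun s => c s * (i == j)%:R).
  by apply: funext => s; rewrite !mxE.
apply: good_mul => //; exact: good_c.
Qed.


Definition gok (f : V -> R) := measurable_fun setT f /\ exists C, forall x, sphere R d x -> `|f x| <= C.

Lemma gok_c c : gok (fun _ => c).
Proof. split; first exact: measurable_cst. by exists `|c|. Qed.

Lemma norm_le1p (t : R) : `|t| <= 1 + t ^+ 2.
Proof. have [t0|t0] := lerP 0 t; [rewrite ger0_norm // | rewrite ltr0_norm //]; nra. Qed.

Lemma gok_x a : gok (fun x => tnth x a).
Proof.
split; first exact: measurable_tnth.
exists 2 => x; rewrite /sphere /= /dotv => Sx.
apply: (le_trans (norm_le1p _)).
have : tnth x a ^+ 2 <= 1.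
  rewrite -Sx (bigD1 a) //= expr2 lerDl; apply: sumr_ge0 => i _; by rewrite -expr2 sqr_ge0.
move=> h; lra.
Qed.

Lemma gok_add f g : gok f -> gok g -> gok (fun x => f x + g x).
Proof.
move=> [mf [C1 h1]] [mg [C2 h2]]; split; first exact: measurable_realfun.measurable_funD.
exists (C1 + C2) => x Sx; apply: (le_trans (ler_normD _ _)); exact: lerD (h1 _ Sx) (h2 _ Sx).
Qed.

Lemma gok_mul f g : gok f -> gok g -> gok (fun x => f x * g x).
Proof.
move=> [mf [C1 h1]] [mg [C2 h2]]; split; first exact: measurable_realfun.measurable_funM.
exists (C1 * C2) => x Sx; rewrite normrM; apply: ler_pM => //; [exact: h1|exact: h2].
Qed.

Lemma gok_sum I (r : seq I) (f : I -> V -> R) : (forall i, gok (f i)) -> gok (fun x => \sum_(i <- r) f i x).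
Proof.
move=> gf; elim: r => [|i r IH].
  have -> : (fun x => \sum_(i <- [::]) f i x) = (fun _ => 0) by apply: funext => s; rewrite big_nil.
  exact: gok_c.
have -> : (fun x => \sum_(j <- i :: r) f j x) = (fun x => f i x + \sum_(j <- r) f j x).
  by apply: funext => s; rewrite big_cons.
exact: gok_add.
Qed.

Lemma eq_big_In I (r : seq I) (f g : I -> R) :
  (forall i, List.In i r -> f i = g i) -> \sum_(i <- r) f i = \sum_(i <- r) g i.
Proof.
elim: r => [|i r IH] h; first by rewrite !big_nil.
rewrite !big_cons h; last by left.
by rewrite IH // => j jr; apply: h; right.
Qed.

Lemma good_sum_in I (r : seq I) (f : I -> seq V -> R) :
  (forall i, List.In i r -> good (f i)) -> good (fun s => \sum_(i <- r) f i s).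
Proof.
elim: r => [|i r IH] gf.
  have -> : (fun s => \sum_(i <- [::]) f i s) = (fun _ => 0) by apply: funext => s; rewrite big_nil.
  exact: good_c.
have -> : (fun s => \sum_(j <- i :: r) f j s) = (fun s => f i s + \sum_(j <- r) f j s).
  by apply: funext => s; rewrite big_cons.
apply: good_add; first by apply: gf; left.
by apply: IH => j jr; apply: gf; right.
Qed.

Lemma gok_sum_in I (r : seq I) (f : I -> V -> R) :
  (forall i, List.In i r -> gok (f i)) -> gok (fun x => \sum_(i <- r) f i x).
Proof.
elim: r => [|i r IH] gf.
  have -> : (fun x => \sum_(i <- [::]) f i x) = (fun _ => 0) by apply: funext => s; rewrite big_nil.
  exact: gok_c.
have -> : (fun x => \sum_(j <- i :: r) f j x) = (fun x => f i x + \sum_(j <- r) f j x).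
  by apply: funext => s; rewrite big_cons.
apply: gok_add; first by apply: gf; left.
by apply: IH => j jr; apply: gf; right.
Qed.

Lemma good_decomp F : good F -> exists L : seq ((V -> R) * (seq V -> R)),
  (forall p, List.In p L -> gok p.1 /\ good p.2) /\
  forall x s, F (x :: s) = \sum_(p <- L) p.1 x * p.2 s.
Proof.
elim => [c|i a|f g _ [L1 [h1 e1]] _ [L2 [h2 e2]]|f g _ [L1 [h1 e1]] _ [L2 [h2 e2]]].
- exists [:: (fun _ => 1, fun _ => c)]; split.
    by move=> p [<-|[]]; split; [exact: gok_c|exact: good_c].
  by move=> x s; rewrite big_seq1 mul1r.
- case: i => [|i].
    exists [:: (fun x => tnth x a, fun _ => 1)]; split.
      by move=> p [<-|[]]; split; [exact: gok_x|exact: good_c].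
    by move=> x s; rewrite big_seq1 mulr1.
  exists [:: (fun _ => 1, fun s => tnth (nth v0 s i) a)]; split.
    by move=> p [<-|[]]; split; [exact: gok_c|exact: good_x].
  by move=> x s; rewrite big_seq1 mul1r.
- exists (L1 ++ L2); split.
    by move=> p /List.in_app_iff [] ?; [exact: h1|exact: h2].
  by move=> x s; rewrite big_cat e1 e2.
- exists (allpairs (fun p q => (fun x => p.1 x * q.1 x, fun s => p.2 s * q.2 s)) L1 L2); split.
    move=> p.
    have : forall L1 : seq ((V -> R) * (seq V -> R)), (forall p, List.In p L1 -> gok p.1 /\ good p.2) ->
      List.In p (allpairs (fun p q => (fun x => p.1 x * q.1 x, fun s => p.2 s * q.2 s)) L1 L2) ->
      gok p.1 /\ good p.2.
      elim => [//|q L IH] hL /=.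
      move/List.in_app_iff => [/List.in_map_iff [q2 [<- inq2]]|].
        have [g1 g1'] := hL q (or_introl erefl).
        have [g2 g2'] := h2 q2 inq2.
        by split; [exact: gok_mul|exact: good_mul].
      by apply: IH => p' ?; apply: hL; right.
    by move=> H; apply: H.
  move=> x s; rewrite e1 e2 big_allpairs_dep mulr_suml; apply: eq_bigr => p1 _.
  rewrite mulr_sumr; apply: eq_bigr => p2 _ /=.
  by rewrite !mulrA; congr (_ * _); rewrite -!mulrA; congr (_ * _); rewrite mulrC.
Qed.


Lemma measurable_sphere : measurable (sphere R d).
Proof.
have mf : measurable_fun setT (fun x : V => dotv x x).
  have [] : gok (fun x : V => \sum_(i <- index_enum 'I_d) (fun i x => tnth x i * tnth x i) i x).
    by apply: gok_sum => i; apply: gok_mul; exact: gok_x.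
  by [].
have := mf measurableT [set 1] (measurable_set1 1).
by rewrite setTI.
Qed.

Section Iter.
Variable mu : {measure set V -> \bar R}.
Hypothesis finS : (mu (sphere R d) < +oo)%E.
Local Notation S := (sphere R d).
Let mS := measurable_sphere.

Lemma gok_int f : gok f -> mu.-integrable S (EFin \o f).
Proof.
move=> [mf [C hC]]; apply: measurable_bounded_integrable => //.
  exact: measurable_funS mf.
exists C; split; first exact: num_real.
by move=> M CM x Sx; apply: le_trans (hC x Sx) (ltW CM).
Qed.

Lemma Rint_sum I (r : seq I) (f : I -> V -> R) : (forall i, gok (f i)) ->
  Rintegral mu S (fun x => \sum_(i <- r) f i x) = \sum_(i <- r) Rintegral mu S (f i).
Proof.
move=> gf; elim: r => [|i r IH].
  rewrite big_nil; under eq_Rintegral do rewrite big_nil.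
  by rewrite Rintegral_cst // mul0r.
rewrite big_cons; under eq_Rintegral do rewrite big_cons.
rewrite RintegralD //; first by rewrite IH.
  exact: gok_int.
by apply: gok_int; apply: gok_sum.
Qed.

Lemma iter_ge0 n F : (forall s, 0 <= F s) -> 0 <= iter_int mu n F.
Proof.
elim: n F => [|n IH] F F0 /=; first exact: F0.
apply: Rintegral_ge0 => x _; apply: IH => s; exact: F0.
Qed.

Definition Lin n := (forall F G, good F -> good G ->
   iter_int mu n (fun s => F s + G s) = iter_int mu n F + iter_int mu n G) /\
  (forall c F, good F -> iter_int mu n (fun s => c * F s) = c * iter_int mu n F).

Lemma iter_sum n I (r : seq I) (H : I -> seq V -> R) : Lin n -> (forall i, List.In i r -> good (H i)) ->
  iter_int mu n (fun s => \sum_(i <- r) H i s) = \sum_(i <- r) iter_int mu n (H i).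
Proof.
move=> [LA LZ]; elim: r => [|i r IH] gH.
  rewrite big_nil.
  have -> : (fun s : seq V => \sum_(i <- [::]) H i s) = (fun s => 0 * 0) by apply: funext => s; rewrite big_nil mul0r.
  by rewrite (LZ 0 (fun _ => 0)) ?mul0r //; exact: good_c.
have -> : (fun s => \sum_(j <- i :: r) H j s) = (fun s => H i s + \sum_(j <- r) H j s).
  by apply: funext => s; rewrite big_cons.
rewrite LA ?IH ?big_cons //.
- by move=> j jr; apply: gH; right.
- by apply: gH; left.
- by apply: good_sum_in => j jr; apply: gH; right.
Qed.

Lemma good_section F x : good F -> good (fun s => F (x :: s)).
Proof.
elim => [c|i a|f g _ hf _ hg|f g _ hf _ hg]; try by constructor.
case: i => [|i] /=; [exact: good_c | exact: good_x].
Qed.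

Lemma lin_int n : Lin n -> forall F, good F ->
  mu.-integrable S (EFin \o (fun x => iter_int mu n (fun s => F (x :: s)))).
Proof.
move=> L F gF; have [Ls [hL eL]] := good_decomp _ gF.
have -> : (fun x => iter_int mu n (fun s => F (x :: s))) =
   (fun x => \sum_(p <- Ls) p.1 x * iter_int mu n p.2).
  apply: funext => x.
  have -> : (fun s => F (x :: s)) = (fun s => \sum_(p <- Ls) p.1 x * p.2 s) by apply: funext => s; exact: eL.
  have [LA LZ] := L.
  rewrite (@iter_sum n _ Ls (fun p s => p.1 x * p.2 s)) //.
    apply: eq_big_In => p pL; rewrite LZ //; exact: (hL p pL).2.
  move=> p pL; apply: good_mul; [exact: good_c | exact: (hL p pL).2].
apply: gok_int; apply: gok_sum_in => p pL; apply: gok_mul; [exact: (hL p pL).1 | exact: gok_c].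
Qed.

Lemma lin_all n : Lin n.
Proof.
elim: n => [|n IH]; first by split.
have Int := lin_int _ IH.
have [LA LZ] := IH.
split.
- move=> F G gF gG /=.
  have -> : (fun x => iter_int mu n (fun s => F (x :: s) + G (x :: s))) =
    (fun x => iter_int mu n (fun s => F (x::s)) + iter_int mu n (fun s => G (x::s))).
    apply: funext => x; apply: LA; exact: good_section.
  by rewrite RintegralD //; apply: Int.
- move=> c F gF /=.
  have -> : (fun x => iter_int mu n (fun s => c * F (x :: s))) =
    (fun x => c * iter_int mu n (fun s => F (x::s))).
    apply: funext => x; apply: LZ; exact: good_section.
  by rewrite RintegralZl //; apply: Int.
Qed.

End Iter.

Definition Zmx k (z : nat -> V) : 'M[R]_(d, k - 2) := \matrix_(a, i) tnth (z (i + 2)%N) a.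
Definition colv (v : V) : 'cV[R]_d := \col_a tnth v a.
Definition Kmx k (z : nat -> V) : 'M[R]_d :=
  \det ((Zmx k z)^T *m Zmx k z) *: 1%:M - Zmx k z *m \adj ((Zmx k z)^T *m Zmx k z) *m (Zmx k z)^T.

Lemma Qk1_cfg k a b z : Qk1 k (cfg a b z) = ((colv a)^T *m Kmx k z *m colv b) ord0 ord0.
Proof.
have eW : Wmx k (cfg a b z) = (Zmx k z)^T *m Zmx k z.
  apply/matrixP => i j; rewrite !mxE /gram_u /dotv !addn2 /cfg /=.
  by apply: eq_bigr => l _; rewrite !mxE !addn2.
have ew : forall v h, cfg a b z h = v -> wvec k (cfg a b z) h = (Zmx k z)^T *m colv v.
  move=> v h hv; apply/matrixP => i j; rewrite !mxE /gram_u /dotv !addn2 hv /cfg /=.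
  by apply: eq_bigr => l _; rewrite !mxE !addn2 mulrC.
rewrite /Qk1 eW (ew a 0%N) // (ew b 1%N) // /Kmx trmx_mul trmxK.
rewrite mulmxBr mulmxBl [RHS]mxE [X in _ = _ + X]mxE. congr (_ - _).
  rewrite -scalemxAr mulmx1 -scalemxAl mxE /gram_u /dotv /cfg /= mxE.
  congr (_ * _); apply: eq_bigr => l _; by rewrite !mxE.
by rewrite !mulmxA.
Qed.

Lemma bil_expand (K : 'M[R]_d) a b : ((colv a)^T *m K *m colv b) ord0 ord0 =
  \sum_l \sum_m tnth a l * tnth b m * K l m.
Proof.
rewrite mxE; under eq_bigr do rewrite mxE big_distrl /=.
rewrite exchange_big /=; apply: eq_bigr => l _; apply: eq_bigr => m _.
by rewrite !mxE; ring.
Qed.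

Lemma Kmx_sym k z : (Kmx k z)^T = Kmx k z.
Proof.
rewrite /Kmx [(_ - _)^T]linearB /= [(_ *: _)^T]linearZ /= tr_scalar_mx !trmx_mul trmxK.
by rewrite trmx_adj trmx_mul trmxK mulmxA.
Qed.

Lemma Qk1_sym k (a b : V) (z : nat -> V) : Qk1 k (cfg a b z) = Qk1 k (cfg b a z).
Proof.
rewrite !Qk1_cfg !bil_expand [RHS]exchange_big; apply: eq_bigr => l _; apply: eq_bigr => m _.
have e : Kmx k z m l = Kmx k z l m by rewrite -{1}(Kmx_sym k z) mxE.
by rewrite e (mulrC (tnth b m)).
Qed.

Lemma Qk1_psd k (v : V) (z : nat -> V) : 0 <= Qk1 k (cfg v v z).
Proof. rewrite Qk1_cfg /Kmx; exact: K_psd. Qed.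


Definition zs (s : seq V) : nat -> V := fun i => nth v0 (v0 :: v0 :: s) i.

Lemma goodmx_Z k : goodmx (fun s => Zmx k (zs s)).
Proof.
move=> a i; have -> : (fun s => Zmx k (zs s) a i) = (fun s => tnth (nth v0 s i) a).
  by apply: funext => s; rewrite mxE addn2.
exact: good_x.
Qed.

Lemma good_K k l m : good (fun s => Kmx k (zs s) l m).
Proof.
have gZ := goodmx_Z k.
have gW : goodmx (fun s => (Zmx k (zs s))^T *m Zmx k (zs s)).
  by apply: goodmx_mul => //; apply: goodmx_tr.
rewrite /Kmx; move: l m; apply: goodmx_sub.
  by apply: goodmx_scale1; apply: good_det.
apply: goodmx_mul; last exact: goodmx_tr.
apply: goodmx_mul => //; exact: goodmx_adj.
Qed.

Lemma cfg_nth (x0 x1 : V) s : (fun i => nth v0 [:: x0, x1 & s] i) = cfg x0 x1 (zs s).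
Proof. by apply: funext => -[|[|i]]. Qed.

Section Meas.
Variable mu : {measure set V -> \bar R}.
Hypothesis finS : (mu (sphere R d) < +oo)%E.
Local Notation S := (sphere R d).
Let mS := measurable_sphere.

Definition mvec : V := [tuple Rintegral mu S (fun x => tnth x l) | l < d].

Lemma RintL (c : 'I_d -> R) (K : 'I_d -> 'I_d -> R) :
  Rintegral mu S (fun x => \sum_l \sum_m tnth x l * c m * K l m) =
  \sum_l \sum_m tnth mvec l * c m * K l m.
Proof.
rewrite Rint_sum //; last first.
  move=> l; apply: gok_sum => m; apply: gok_mul; last exact: gok_c.
  apply: gok_mul; [exact: gok_x|exact: gok_c].
apply: eq_bigr => l _; rewrite Rint_sum //; last first.
  move=> m; apply: gok_mul; last exact: gok_c.
  apply: gok_mul; [exact: gok_x|exact: gok_c].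
apply: eq_bigr => m _.
under eq_Rintegral do rewrite -mulrA.
rewrite RintegralZr //; last exact/gok_int/gok_x.
by rewrite tnth_mktuple mulrA.
Qed.

Lemma RintR (c : 'I_d -> R) (K : 'I_d -> 'I_d -> R) :
  Rintegral mu S (fun x => \sum_l \sum_m c l * tnth x m * K l m) =
  \sum_l \sum_m c l * tnth mvec m * K l m.
Proof.
rewrite Rint_sum //; last first.
  move=> l; apply: gok_sum => m; apply: gok_mul; last exact: gok_c.
  apply: gok_mul; [exact: gok_c|exact: gok_x].
apply: eq_bigr => l _; rewrite Rint_sum //; last first.
  move=> m; apply: gok_mul; last exact: gok_c.
  apply: gok_mul; [exact: gok_c|exact: gok_x].
apply: eq_bigr => m _.
under eq_Rintegral do rewrite mulrAC.
rewrite RintegralZl //; last exact/gok_int/gok_x.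
by rewrite tnth_mktuple mulrAC.
Qed.

Lemma iter_bil k n (c : 'I_d -> 'I_d -> R) :
  iter_int mu n (fun s => \sum_l \sum_m c l m * Kmx k (zs s) l m) =
  \sum_l \sum_m c l m * iter_int mu n (fun s => Kmx k (zs s) l m).
Proof.
have [LA LZ] := lin_all mu finS n.
rewrite iter_sum //; last first.
  move=> l _; apply: good_sum => m; apply: good_mul; [exact: good_c|exact: good_K].
apply: eq_bigr => l _; rewrite iter_sum //; last first.
  move=> m _; apply: good_mul; [exact: good_c|exact: good_K].
apply: eq_bigr => m _; rewrite LZ //; exact: good_K.
Qed.

Lemma energy_formula k n (kn : k = n.+2) :
  energy k (@Qk1 R d k) mu =
  \sum_l \sum_m tnth mvec l * tnth mvec m * iter_int mu n (fun s => Kmx k (zs s) l m).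
Proof.
have E : forall F, iter_int mu k F = iter_int mu n.+2 F by rewrite kn.
rewrite /energy E /=.
have -> : (fun x0 => Rintegral mu S (fun x1 => iter_int mu n
   (fun s => Qk1 k (fun i => nth v0 [:: x0, x1 & s] i)))) =
   (fun x0 => \sum_l \sum_m tnth x0 l * tnth mvec m * iter_int mu n (fun s => Kmx k (zs s) l m)).
  apply: funext => x0.
  have -> : (fun x1 => iter_int mu n (fun s => Qk1 k (fun i => nth v0 [:: x0, x1 & s] i))) =
    (fun x1 => \sum_l \sum_m tnth x0 l * tnth x1 m * iter_int mu n (fun s => Kmx k (zs s) l m)).
    apply: funext => x1; rewrite -iter_bil; congr iter_int; apply: funext => s.
    by rewrite cfg_nth Qk1_cfg bil_expand.
  exact: RintR.
exact: RintL.
Qed.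

End Meas.


Lemma mxactN1 (x : V) i : tnth (mxact (- 1%:M) x) i = - tnth x i.
Proof.
rewrite /mxact tnth_mktuple (bigD1 i) //= big1 ?addr0.
  by rewrite !mxE eqxx mulN1r.
by move=> j ji; rewrite !mxE eq_sym (negbTE ji) oppr0 mul0r.
Qed.

Lemma prob_finS (P : probability V R) : (P (sphere R d) < +oo)%E.
Proof. by apply: (le_lt_trans (probability_le1 P measurable_sphere)); exact: ltey. Qed.

Lemma sigma_odd (sigma : probability V R) : is_normalized_surface_measure sigma ->
  forall l, Rintegral sigma (sphere R d) (fun x => tnth x l) = 0.
Proof.
move=> [_ hs] l.
set T := mxact (- 1%:M : 'M[R]_d).
have UU : (- 1%:M : 'M[R]_d) *m (- 1%:M)^T = 1%:M.
  by rewrite [(- _)^T]linearN /= trmx1 mulmxN mulNmx opprK mulmx1.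
have mT : measurable_fun setT T.
  apply/measurable_fun_tnthP => i.
  have -> : (@tnth d R ^~ i \o T) = (fun x => -1 * tnth x i) by apply: funext => x; rewrite /= mxactN1 mulN1r.
  by have [] := gok_mul _ _ (gok_c (-1)) (gok_x i).
have dT : forall x, dotv (T x) (T x) = dotv x x.
  by move=> x; rewrite /dotv; apply: eq_bigr => i _; rewrite !mxactN1 mulrNN.
have TS : T @^-1` sphere R d = sphere R d.
  by apply/seteqP; split => x; rewrite /preimage /sphere /= dT.
have fS := prob_finS sigma.
have mf : measurable_fun [set: V] (EFin \o (fun x : V => tnth x l)).
  by apply/measurable_EFinP; have [] := gok_x l.
have intf : sigma.-integrable (T @^-1` sphere R d) ((EFin \o (fun x : V => tnth x l)) \o T).
  rewrite TS; have -> : ((EFin \o (fun x : V => tnth x l)) \o T) = EFin \o (fun x => -1 * tnth x l).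
    by apply: funext => x /=; rewrite mxactN1 mulN1r.
  by apply: gok_int => //; apply: gok_mul; [exact: gok_c|exact: gok_x].
have H := integral_pushforward mT mf intf measurable_sphere.
rewrite (eq_measure_integral sigma) in H; last first.
  by move=> A mA _; change (sigma (T @^-1` A) = sigma A); exact: hs.
rewrite TS in H.
have e : Rintegral sigma (sphere R d) (fun x => tnth x l) =
         Rintegral sigma (sphere R d) (fun x => -1 * tnth x l).
  rewrite /Rintegral H; congr fine; apply: eq_integral => x _ /=.
  by rewrite mxactN1 mulN1r.
move: e; rewrite (RintegralZl _ measurable_sphere); last by apply: gok_int => //; exact: gok_x.
move=> e; lra.
Qed.


Lemma bil_psd k (c : V) (z : nat -> V) :
  0 <= \sum_l \sum_m tnth c l * tnth c m * Kmx k z l m.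
Proof. by rewrite -bil_expand -Qk1_cfg; exact: Qk1_psd. Qed.

Lemma energy_ge0 (mu : {measure set V -> \bar R}) (finS : (mu (sphere R d) < +oo)%E) k n :
  k = n.+2 -> 0 <= energy k (@Qk1 R d k) mu.
Proof.
move=> kn; rewrite (energy_formula mu finS k n kn).
rewrite -(iter_bil mu finS k n (fun l m => tnth (mvec mu) l * tnth (mvec mu) m)).
apply: iter_ge0 => s; exact: bil_psd.
Qed.

Lemma energy_sigma0 (sigma : probability V R) k n : is_normalized_surface_measure sigma ->
  k = n.+2 -> energy k (@Qk1 R d k) sigma = 0.
Proof.
move=> hs kn; rewrite (energy_formula sigma (prob_finS sigma) k n kn).
apply: big1 => l _; apply: big1 => m _.
by rewrite /mvec tnth_mktuple (sigma_odd sigma hs) !mul0r.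
Qed.

Lemma finS_jpos (nu : {charge set V -> \bar R}) P N (nuPN : hahn_decomposition nu P N) :
  (jordan_pos nuPN (sphere R d) < +oo)%E.
Proof. by have := fin_num_measure (jordan_pos nuPN) _ measurable_sphere; rewrite fin_numElt => /andP[]. Qed.

Lemma finS_jneg (nu : {charge set V -> \bar R}) P N (nuPN : hahn_decomposition nu P N) :
  (jordan_neg nuPN (sphere R d) < +oo)%E.
Proof. by have := fin_num_measure (jordan_neg nuPN) _ measurable_sphere; rewrite fin_numElt => /andP[]. Qed.

Lemma cint_ge0 k (z : nat -> V) (nu : {charge set V -> \bar R}) P N (nuPN : hahn_decomposition nu P N) :
  0 <= cint nuPN (fun y => cint nuPN (fun x => Qk1 k (cfg x y z))).
Proof.
have fP := finS_jpos _ _ _ nuPN; have fN := finS_jneg _ _ _ nuPN.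
set K := Kmx k z.
set c : V := [tuple tnth (mvec (jordan_pos nuPN)) l - tnth (mvec (jordan_neg nuPN)) l | l < d].
have inner : forall y, cint nuPN (fun x => Qk1 k (cfg x y z)) =
   \sum_l \sum_m tnth c l * tnth y m * K l m.
  move=> y; rewrite /cint.
  have -> : (fun x => Qk1 k (cfg x y z)) = (fun x => \sum_l \sum_m tnth x l * tnth y m * K l m).
    by apply: funext => x; rewrite Qk1_cfg bil_expand.
  rewrite (RintL _ fP (fun m => tnth y m) K) (RintL _ fN (fun m => tnth y m) K) -sumrB; apply: eq_bigr => l _; rewrite -sumrB; apply: eq_bigr => m _.
  by rewrite -!mulrBl [tnth c l]tnth_mktuple.
have -> : (fun y => cint nuPN (fun x => Qk1 k (cfg x y z))) =
  (fun y => \sum_l \sum_m tnth c l * tnth y m * K l m) by apply: funext => y; exact: inner.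
rewrite /cint.
rewrite (RintR _ fP (fun l => tnth c l) K) (RintR _ fN (fun l => tnth c l) K) -sumrB.
have -> : \sum_l (\sum_m tnth c l * tnth (mvec (jordan_pos nuPN)) m * K l m -
      \sum_m tnth c l * tnth (mvec (jordan_neg nuPN)) m * K l m) =
   \sum_l \sum_m tnth c l * tnth c m * K l m.
  apply: eq_bigr => l _; rewrite -sumrB; apply: eq_bigr => m _.
  by rewrite [tnth c m]tnth_mktuple -mulrBl -mulrBr.
exact: bil_psd.
Qed.

End Good.

Theorem lemma6p2 (R : realType) (d k : nat) (hk3 : (3 <= k)%N) (hkd : (k <= d.+1)%N) :
  k_pos_def k (@Qk1 R d k) /\
  (forall sigma : probability (vec R d) R, is_normalized_surface_measure sigma ->
   forall mu : probability (vec R d) R, sphere_prob mu ->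
     energy k (@Qk1 R d k) sigma <= energy k (@Qk1 R d k) mu).
Proof.
have kn : k = (k - 2).+2 by rewrite -addn2 subnK // (leq_trans _ hk3).
split.
  split.
    by move=> x y z _ _ _; exact: Qk1_sym.
  by move=> z _ nu P N nuPN; exact: cint_ge0.
move=> sigma hs mu _.
rewrite (energy_sigma0 _ _ _ _ _ hs kn); exact: (energy_ge0 _ _ _ (prob_finS _ _ mu) _ _ kn).
Qed.
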